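(* Let $\mu,\nu\in\mathbb{H}$ be pure unit quaternions, let $N\ge 1$, and let $\alpha_1,\ldots,\alpha_N,\beta_1,\ldots,\beta_N$ be real angles. Let $q$ be a quaternion-valued Gaussian random variable such that, for every $i\in\{1,\ldots,N\}$, $q\stackrel{d}{=} e^{\mu\alpha_i}\,q\,e^{\nu\beta_i}$. Then $q\stackrel{d}{=} e^{\mu\zeta}\,q\,e^{\nu\chi}$, where $\zeta=\sum_{i=1}^N\alpha_i$ and $\chi=\sum_{i=1}^N\beta_i$.
   Context: $\mathbb{H}$ denotes Hamilton's quaternions with basis $1,\mathbf{i},\mathbf{j},\mathbf{k}$, $\mathbf{i}^2=\mathbf{j}^2=\mathbf{k}^2=\mathbf{i}\mathbf{j}\mathbf{k}=-1$. A quaternion is pure if its real (scalar) part is zero; for a pure unit quaternion $\mu$ (so $\mu^2=-1$) and real $\theta$, $e^{\mu\theta}=\cos\theta+\mu\sin\theta$. A quaternion Gaussian random variable is a random quaternion $q=a+b\mathbf{i}+c\mathbf{j}+d\mathbf{k}$ whose real vector $(a,b,c,d)$ is Gaussian. The notation $X\stackrel{d}{=}Y$ means equality in distribution. In the paper's terminology, $q\stackrel{d}{=}e^{\mu\alpha}qe^{\nu\beta}$ is called ${}^{\alpha}(\mu,\nu)^{\beta}$-properness. *)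

(* Defs.v *)
From HB Require Import structures.
From mathcomp Require Import all_boot all_order all_algebra.
From mathcomp Require Import all_classical all_reals all_analysis.
Set Implicit Arguments.
Unset Strict Implicit.
Unset Printing Implicit Defensive.
Import Order.TTheory GRing.Theory Num.Theory.
Local Open Scope classical_set_scope.
Local Open Scope ring_scope.

(** * Hamilton's quaternions over a real field R: q = qr + qi i + qj j + qk k *)
Record quat (R : Type) := Quat { qr : R; qi : R; qj : R; qk : R }.

Section Quaternions.
Variable R : realType.

(** Hamilton product, with i^2 = j^2 = k^2 = ijk = -1. *)
Definition qmul (p q : quat R) : quat R :=
  Quat (qr p * qr q - qi p * qi q - qj p * qj q - qk p * qk q)
       (qr p * qi q + qi p * qr q + qj p * qk q - qk p * qj q)
       (qr p * qj q - qi p * qk q + qj p * qr q + qk p * qi q)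
       (qr p * qk q + qi p * qj q - qj p * qi q + qk p * qr q).

Definition qnorm2 (q : quat R) : R :=
  qr q ^+ 2 + qi q ^+ 2 + qj q ^+ 2 + qk q ^+ 2.

Definition qpure (q : quat R) : Prop := qr q = 0.

Definition qunit (q : quat R) : Prop := qnorm2 q = 1.

(** e^{mu theta} = cos theta + mu sin theta (mu a pure unit quaternion) *)
Definition qexp (mu : quat R) (theta : R) : quat R :=
  Quat (cos theta + sin theta * qr mu) (sin theta * qi mu)
       (sin theta * qj mu) (sin theta * qk mu).

(** the real vector (a,b,c,d) of q = a + b i + c j + d k, as an element of the
    product measurable space R * R * (R * R) (Borel product sigma-algebra) *)
Definition qvec (q : quat R) : R * R * (R * R) := (qr q, qi q, (qj q, qk q)).

End Quaternions.

Section GaussianRV.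
Context {R : realType} {d : measure_display} {T : measurableType d}.
Variable P : probability T R.

(** A real random variable is Gaussian if its law is a normal law N(m, s^2)
    with s > 0, or a degenerate Gaussian (Dirac mass at m). *)
Definition real_gaussian (Y : T -> R) : Prop :=
  measurable_fun setT Y /\
  exists m : R,
    (exists s : R, 0 < s /\
       forall A : set R, measurable A -> P (Y @^-1` A) = normal_prob m s A)
    \/ (forall A : set R, measurable A -> P (Y @^-1` A) = dirac m A).

(** A quaternion random variable q = a + b i + c j + d k is Gaussian if the real
    random vector (a,b,c,d) is Gaussian, i.e. its components are random variables
    and every real linear combination of them is a real Gaussian r.v. *)
Definition quat_gaussian (q : T -> quat R) : Prop :=
  [/\ measurable_fun setT (fun w => qr (q w)),
      measurable_fun setT (fun w => qi (q w)),
      measurable_fun setT (fun w => qj (q w)),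
      measurable_fun setT (fun w => qk (q w)) &
      forall t0 t1 t2 t3 : R,
        real_gaussian (fun w => t0 * qr (q w) + t1 * qi (q w)
                                + t2 * qj (q w) + t3 * qk (q w))].

Definition quat_eqd (q q' : T -> quat R) : Prop :=
  forall A : set (R * R * (R * R)), measurable A ->
    P ((fun w => qvec (q w)) @^-1` A) = P ((fun w => qvec (q' w)) @^-1` A).

End GaussianRV.

(* Main.v *)
Require Import Defs.
From HB Require Import structures.
From mathcomp Require Import all_boot all_order all_algebra.
From mathcomp Require Import all_classical all_reals all_analysis.
From mathcomp Require Import ring lra.
Import Order.TTheory GRing.Theory Num.Theory.
Local Open Scope classical_set_scope.
Local Open Scope ring_scope.

Section Aux.
Variable R : realType.
Let V := (R * R * (R * R))%type.

Definition qmeas (f : V -> quat R) : Prop :=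
  [/\ measurable_fun setT (fun x => qr (f x)),
      measurable_fun setT (fun x => qi (f x)),
      measurable_fun setT (fun x => qj (f x)) &
      measurable_fun setT (fun x => qk (f x))].

Lemma qmeas_cst (u : quat R) : qmeas (fun _ => u).
Proof. by split; apply: measurable_cst. Qed.

Lemma qmeas_id : qmeas (fun x => Quat x.1.1 x.1.2 x.2.1 x.2.2).
Proof.
split => /=.
- exact: (measurableT_comp measurable_fst measurable_fst).
- exact: (measurableT_comp measurable_snd measurable_fst).
- exact: (measurableT_comp measurable_fst measurable_snd).
- exact: (measurableT_comp measurable_snd measurable_snd).
Qed.

Lemma qmeas_mul f g : qmeas f -> qmeas g -> qmeas (fun x => qmul (f x) (g x)).
Proof.
move=> [f1 f2 f3 f4] [g1 g2 g3 g4]; split => /=;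
repeat (apply: measurable_realfun.measurable_funB || apply: measurable_realfun.measurable_funD);
apply: measurable_realfun.measurable_funM => //.
Qed.

Lemma qmeas_vec f : qmeas f -> measurable_fun setT (fun x => qvec (f x)).
Proof.
move=> [f1 f2 f3 f4]; rewrite /qvec.
apply: measurable_fun_pair; apply: measurable_fun_pair => //.
Qed.

End Aux.

Section Alg.
Variable R : realType.

Definition Lq (mu nu : quat R) (a b : R) (x : quat R) :=
  qmul (qmul (qexp mu a) x) (qexp nu b).

Lemma qmulA (x y z : quat R) : qmul x (qmul y z) = qmul (qmul x y) z.
Proof. case: x => ????; case: y => ????; case: z => ????; rewrite /qmul /=; congr Quat; ring. Qed.

Lemma eq_mod (x y t n : R) : x - y = t * (1 - n) -> n = 1 -> x = y.
Proof. by move=> h hn; apply/eqP; rewrite -subr_eq0 h hn subrr mulr0. Qed.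

Lemma qexpD (mu : quat R) a c : qpure mu -> qunit mu ->
  qmul (qexp mu a) (qexp mu c) = qexp mu (a + c).
Proof.
case: mu => r i j k; rewrite /qpure /qunit /qnorm2 /= => -> hn.
rewrite /qmul /qexp /= cosD sinD; congr Quat.
- apply: (@eq_mod _ _ (sin a * sin c) _ _ hn); ring.
- ring.
- ring.
- ring.
Qed.

Lemma qexp0 (mu : quat R) : qpure mu -> qexp mu 0 = Quat 1 0 0 0.
Proof. by case: mu => r i j k; rewrite /qpure /qexp /= => ->; rewrite cos0 sin0 !mul0r addr0. Qed.

Lemma Lq0 mu nu x : qpure mu -> qpure nu -> Lq mu nu 0 0 x = x.
Proof.
move=> hm hn; rewrite /Lq !qexp0 //; case: x => ????; rewrite /qmul /=; congr Quat; ring.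
Qed.

Lemma LqD mu nu a b c d x : qpure mu -> qunit mu -> qpure nu -> qunit nu ->
  Lq mu nu a b (Lq mu nu c d x) = Lq mu nu (a + c) (b + d) x.
Proof.
move=> h1 h2 h3 h4; rewrite /Lq -qexpD // -(addrC d) -qexpD //.
by rewrite !qmulA.
Qed.

End Alg.
Arguments Lq {R}.

Lemma meas_pre (R : realType) (f : R * R * (R * R) -> R * R * (R * R)) (A : set _) :
  measurable_fun setT f -> measurable A -> measurable (f @^-1` A).
Proof. by move=> mf mA; rewrite -[f @^-1` A]setTI; apply: mf. Qed.

Theorem mainTheorem1 (R : realType) (d : measure_display) (T : measurableType d)
    (P : probability T R) (mu nu : quat R) (N : nat)
    (alpha beta : 'I_N -> R) (q : T -> quat R) :
  qpure mu -> qunit mu -> qpure nu -> qunit nu ->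
  (0 < N)%N ->
  quat_gaussian P q ->
  (forall i : 'I_N,
     quat_eqd P q (fun w => qmul (qmul (qexp mu (alpha i)) (q w)) (qexp nu (beta i)))) ->
  quat_eqd P q (fun w => qmul (qmul (qexp mu (\sum_(i < N) alpha i)) (q w))
                              (qexp nu (\sum_(i < N) beta i))).
Proof.
move=> h1 h2 h3 h4 _ _.
pose X w := qvec (q w).
pose G a b (x : R * R * (R * R)) := qvec (Lq mu nu a b (Quat x.1.1 x.1.2 x.2.1 x.2.2)).
have mG a b : measurable_fun setT (G a b).
  apply: qmeas_vec; apply: qmeas_mul; last exact: qmeas_cst.
  apply: qmeas_mul; [exact: qmeas_cst | exact: qmeas_id].
have eqdE a b : quat_eqd P q (fun w => Lq mu nu a b (q w)) <->
   (forall A, measurable A -> P (X @^-1` A) = P (X @^-1` (G a b @^-1` A))).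
  have pe A : (fun w => qvec (Lq mu nu a b (q w))) @^-1` A = X @^-1` (G a b @^-1` A).
    by apply: funext => w; rewrite /preimage /X /G /=; case: (q w).
  by split => h A mA; [rewrite -pe | rewrite pe]; apply: h.
suff : forall n (a b : 'I_n -> R),
  (forall i, quat_eqd P q (fun w => Lq mu nu (a i) (b i) (q w))) ->
  quat_eqd P q (fun w => Lq mu nu (\sum_(i < n) a i) (\sum_(i < n) b i) (q w)).
  by move=> H Hi; apply: (H N alpha beta Hi).
elim => [|n IH] a b Ha.
  rewrite !big_ord0 => A mA; congr (P _); apply: funext => w.
  by rewrite /preimage /= Lq0.
rewrite !big_ord_recl.
have H0 := Ha ord0.
have H1 := IH _ _ (fun i => Ha (lift ord0 i)).
move/eqdE: H0 => H0; move/eqdE: H1 => H1.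
apply/eqdE => A mA.
have pe : G (a ord0 + \sum_(i < n) a (lift ord0 i)) (b ord0 + \sum_(i < n) b (lift ord0 i)) @^-1` A
   = G (\sum_(i < n) a (lift ord0 i)) (\sum_(i < n) b (lift ord0 i)) @^-1`
      (G (a ord0) (b ord0) @^-1` A).
  apply: funext => x; rewrite /preimage /G /= -LqD //.
rewrite pe -H1; last exact: meas_pre.
exact: H0.
Qed.
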